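(* The class of locally strongly sober spaces is projective, and so is the class of strongly sober spaces. That is: if $(p_{ij}\colon X_j\to X_i)_{i\sqsubseteq j\in I}$ is a projective system of topological spaces in which every $X_i$ is locally strongly sober (resp. strongly sober), then every projective limit of this system, taken in the category of topological spaces and continuous maps, is locally strongly sober (resp. strongly sober).
   Context: A projective system of topological spaces consists of a directed preordered set $(I,\sqsubseteq)$ (non-empty, any two elements have an upper bound), topological spaces $X_i$ ($i\in I$) and continuous maps $p_{ij}\colon X_j\to X_i$ for $i\sqsubseteq j$ with $p_{ii}=\mathrm{id}$ and $p_{ij}\circ p_{jk}=p_{ik}$. Its projective limit is its categorical limit in the category of topological spaces; canonically it is the subspace $\{\vec x\in\prod_{i\in I}X_i \mid p_{ij}(x_j)=x_i \text{ for all } i\sqsubseteq j\}$ of the product, with the coordinate projections. A class of spaces is projective if projective limits of projective systems of spaces in the class are in the class. The specialization preorder of a space is $x\le y$ iff every open neighbourhood of $x$ contains $y$; $\downarrow x$ denotes the set of points below $x$ (the closure of $\{x\}$). A space $X$ is locally strongly sober if for every convergent ultrafilter $\mathcal U$ on $X$, the set $\lim\mathcal U$ of its limits equals $\downarrow x$ for a unique point $x$; it is strongly sober if this holds for every ultrafilter $\mathcal U$ on $X$ (equivalently, $X$ is locally strongly sober and compact). Compactness assumes no separation axiom. *)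

(* Defs.v *)
From HB Require Import structures.
From mathcomp Require Import all_boot all_order.
From mathcomp Require Import all_classical all_reals all_analysis.
Set Implicit Arguments. Unset Strict Implicit. Unset Printing Implicit Defensive.
Local Open Scope classical_set_scope.

Definition spec_le (X : topologicalType) (x y : X) : Prop :=
  forall U : set X, open U -> U x -> U y.

Definition spec_down (X : topologicalType) (x : X) : set X :=
  [set y | spec_le y x].

Definition limits (X : topologicalType) (F : set_system X) : set X :=
  [set x | F --> x].

Definition locally_strongly_sober (X : topologicalType) : Prop :=
  forall U : set_system X, UltraFilter U -> (exists x : X, U --> x) ->
    exists! x : X, limits U = spec_down x.

Definition strongly_sober (X : topologicalType) : Prop :=
  forall U : set_system X, UltraFilter U ->
    exists! x : X, limits U = spec_down x.

Definition directed_preorder (I : Type) (le : I -> I -> Prop) : Prop :=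
  [/\ (forall i, le i i),
      (forall i j k, le i j -> le j k -> le i k),
      inhabited I &
      (forall i j, exists k, le i k /\ le j k)].

Definition projective_system (I : Type) (le : I -> I -> Prop)
  (X : I -> topologicalType) (p : forall i j, le i j -> X j -> X i) : Prop :=
  [/\ directed_preorder le,
      (forall i j (h : le i j), continuous (p i j h)),
      (forall i (h : le i i) (x : X i), p i i h x = x) &
      (forall i j k (hij : le i j) (hjk : le j k) (hik : le i k) (x : X k),
          p i j hij (p j k hjk x) = p i k hik x)].

Definition is_cone (I : Type) (le : I -> I -> Prop)
  (X : I -> topologicalType) (p : forall i j, le i j -> X j -> X i)
  (Y : topologicalType) (q : forall i, Y -> X i) : Prop :=
  (forall i, continuous (q i)) /\
  (forall i j (h : le i j) (y : Y), p i j h (q j y) = q i y).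

Definition is_projective_limit (I : Type) (le : I -> I -> Prop)
  (X : I -> topologicalType) (p : forall i j, le i j -> X j -> X i)
  (Y : topologicalType) (q : forall i, Y -> X i) : Prop :=
  is_cone p q /\
  forall (Z : topologicalType) (f : forall i, Z -> X i), is_cone p f ->
    exists! g : Z -> Y, continuous g /\ (forall i (z : Z), q i (g z) = f i z).

(* Main.v *)
Require Import Defs.
From mathcomp Require Import all_boot all_order.
From mathcomp Require Import all_classical all_reals all_analysis.
Set Implicit Arguments. Unset Strict Implicit. Unset Printing Implicit Defensive.
Local Open Scope classical_set_scope.

Definition goodX (Q : Prop) (X : topologicalType) :=
  forall W : set_system X, UltraFilter W -> (exists c : X, W --> c) \/ Q ->
    exists! x : X, limits W = spec_down x.

Section Generic.
Variable X : topologicalType.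

Lemma spec_refl (x : X) : spec_le x x.
Proof. by []. Qed.

Lemma spec_trans (x y z : X) : spec_le x y -> spec_le y z -> spec_le x z.
Proof. by move=> h1 h2 U oU Ux; apply: h2 => //; apply: h1. Qed.

Lemma spec_nbhs (x y : X) : spec_le x y -> forall A, nbhs x A -> A y.
Proof.
move=> h A; rewrite nbhsE => -[B [oB Bx] BA]; apply: BA; exact: h.
Qed.

Lemma spec_principal (x y : X) : spec_le x y <-> principal_filter y --> x.
Proof.
split.
  by move=> h A /(spec_nbhs h) Ay; apply/principal_filterP.
move=> h U oU Ux; have : nbhs x U by apply: open_nbhs_nbhs.
by move/h => /principal_filterP.
Qed.

Lemma limits_principal (a : X) : limits (principal_filter a) = spec_down a.
Proof.
by rewrite /limits /spec_down predeqE => z /=; rewrite spec_principal.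
Qed.

Lemma goodX_T0 Q : goodX Q X -> forall a b : X, spec_le a b -> spec_le b a -> a = b.
Proof.
move=> hX a b ab ba.
have := hX (principal_filter a) (principal_filter_ultra a).
case.
  by left; exists a; apply/spec_principal; exact: spec_refl.
move=> x [hx hu].
have ea : x = a by apply: hu; rewrite limits_principal.
have eb : x = b.
  apply: hu; rewrite limits_principal /spec_down predeqE => z /=; split.
    by move=> h; apply: spec_trans h ab.
  by move=> h; apply: spec_trans h ba.
by rewrite -ea -eb.
Qed.

Lemma ultra_fmap (Z : Type) (f : Z -> X) (U : set_system Z) :
  UltraFilter U -> UltraFilter (f @ U).
Proof.
move=> UU; split; first exact: fmap_proper_filter.
move=> G GF sUG; rewrite predeqE => A; split; last exact: sUG.
move=> GA; have [//|UnA] := in_ultra_setVsetC (f @^-1` A) UU.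
have GnA : G (~` A) by apply: sUG.
by have /filter_ex [? []] : G (A `&` (~` A)) by exact: filterI.
Qed.

Lemma cont_spec (Z : topologicalType) (f : X -> Z) (a b : X) :
  continuous f -> spec_le a b -> spec_le (f a) (f b).
Proof.
move=> cf ab U oU Ufa.
have : open (f @^-1` U) by exact: open_comp.
by move/ab; apply.
Qed.


Lemma filtered_inf (K : Type) (z : K -> X) : inhabited K ->
  (forall k1 k2, exists k3, spec_le (z k3) (z k1) /\ spec_le (z k3) (z k2)) ->
  exists W : set_system X, UltraFilter W /\
    limits W = [set y | forall k, spec_le y (z k)].
Proof.
move=> [k0] hfilt.
pose D := [set kO : K * set X | open kO.2 /\ forall k', kO.2 (z k')].
pose B := fun kO : K * set X => spec_down (z kO.1) `&` kO.2.
have GF : Filter (filter_from D B).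
  apply: filter_from_filter.
    by exists (k0, setT); split => //; exact: openT.
  move=> [k1 O1] [k2 O2] [oO1 hO1] [oO2 hO2].
  have [k3 [h31 h32]] := hfilt k1 k2.
  exists (k3, O1 `&` O2).
    split; first exact: openI.
    by move=> k'; split; [apply: hO1|apply: hO2].
  move=> y [yk3 hO12]; case: hO12 => O1y O2y; split; split => //.
    exact: spec_trans yk3 h31.
  exact: spec_trans yk3 h32.
have GP : ProperFilter (filter_from D B).
  apply: filter_from_proper => -[k O] [oO hO].
  by exists (z k); split; [exact: spec_refl|exact: hO].
have [W [WU GW]] := ultraFilterLemma GP.
exists W; split => //.
rewrite /limits predeqE => y /=; split.
  move=> Wy k U oU Uy.
  have WUs : W U by apply: Wy; exact: open_nbhs_nbhs.
  have Wk : W (spec_down (z k)).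
    apply: GW; exists (k, setT); first by split => //; exact: openT.
    by move=> w [].
  have [w [Uw wk]] := filter_ex (filterI WUs Wk).
  exact: wk.
move=> hy A; rewrite nbhsE => -[V [oV Vy] VA].
apply: (filterS VA); apply: (filterS (P := B (k0, V))).
  by move=> w [].
apply: GW; exists (k0, V) => //; split => // k'.
exact: hy.
Qed.

Lemma cvg_cont (W : topologicalType) (f : X -> W) (F : set_system X) (z : X) :
  continuous f -> F --> z -> f @ F --> f z.
Proof. by move=> cf Fz A hA; apply: Fz; exact: cf z A hA. Qed.

End Generic.

Unset Implicit Arguments.

Section Limit.
Variables (I : Type) (le : I -> I -> Prop) (X : I -> topologicalType)
  (p : forall i j, le i j -> X j -> X i).
Hypothesis hsys : projective_system p.
Variables (Y : topologicalType) (q : forall i, Y -> X i).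
Hypothesis hlim : is_projective_limit p q.

Lemma lim_cont i : continuous (q i).
Proof. by case: hlim => -[+ _] _; apply. Qed.

Lemma lim_cone i j (h : le i j) y : p i j h (q j y) = q i y.
Proof. by case: hlim => -[_ +] _; apply. Qed.

Lemma pts_eq (y y' : Y) : (forall i, q i y = q i y') -> y = y'.
Proof.
move=> hyy; have [_ hu] := hlim.
have cone : is_cone p (fun i (_ : Y) => q i y).
  split; first by move=> i; exact: cst_continuous.
  by move=> i j h _; exact: lim_cone.
have [g [_ gu]] := hu Y _ cone.
have e1 : g = (fun _ => y) by apply: gu; split => //; exact: cst_continuous.
have e2 : g = (fun _ => y').
  by apply: gu; split => [|i z]; [exact: cst_continuous|rewrite hyy].
by have := congr1 (fun h => h y) (etrans (esym e1) e2).
Qed.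

Lemma thread_pt (y0 : Y) (m : forall i, X i) :
  (forall i j h, p i j h (m j) = m i) -> exists y, forall i, q i y = m i.
Proof.
move=> hm; have [_ hu] := hlim.
have cone : is_cone p (fun i (_ : Y) => m i).
  split; first by move=> i; exact: cst_continuous.
  by move=> i j h _; exact: hm.
have [g [[_ gq] _]] := hu Y _ cone.
by exists (g y0) => i; rewrite gq.
Qed.

Let Z := sup_topology (fun i => Topological.on (initial_topology (q i))).

Lemma Z_cont i : continuous (q i : Z -> X i).
Proof.
move=> z A hA.
have h1 := @initial_continuous Y (X i) (q i) z A hA.
have h2 : nbhs (z : Z) --> (z : Z) by exact: cvg_refl.
move/cvg_sup : h2 => /(_ i) h3.
exact: h3 _ h1.
Qed.

Lemma Z_id : forall y : Y, exists g : Z -> Y, continuous g /\ forall z, g z = z.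
Proof.
move=> _; have [_ hu] := hlim.
have cone : is_cone p (fun i (z : Z) => q i z).
  split; first exact: Z_cont.
  by move=> i j h z; exact: lim_cone.
have [g [[gc gq] _]] := hu Z _ cone.
exists g; split => // z; apply: pts_eq => i; exact: gq.
Qed.

Lemma lim_cvg (F : set_system Y) (y : Y) : Filter F ->
  (forall i, q i @ F --> q i y) -> F --> y.
Proof.
move=> FF hF.
have hZ : F --> (y : Z).
  apply/cvg_sup => i A.
  rewrite (@nbhsE (initial_topology (q i))) => -[B [[C oC <-] Cy] BA].
  apply: (filterS BA); apply: (hF i); exact: open_nbhs_nbhs.
have [g [gc gid]] := Z_id y.
have hg := gc y.
move=> A hA0.
have hA : nbhs (g y) A by rewrite gid.
move: (hg A hA) => /= hA2.
have := hZ _ hA2.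
by apply: filterS => w; rewrite /preimage /= gid.
Qed.

Lemma lim_spec (y y' : Y) : (forall i, spec_le (q i y) (q i y')) -> spec_le y y'.
Proof.
move=> h; apply/spec_principal; apply: lim_cvg => i A.
move=> /(proj1 (spec_principal _ _) (h i)) /principal_filterP hA.
exact/principal_filterP.
Qed.

Variable Q : Prop.
Hypothesis hX : forall i, goodX Q (X i).
Variable U : set_system Y.
Hypothesis UU : UltraFilter U.
Hypothesis hconv : (exists y0 : Y, U --> y0) \/ Q.

Lemma main_lemma : exists! y : Y, limits U = spec_down y.
Proof.
have [[hrefl htrans [i0] hdir] pcont pid pcomp] := hsys.
have pmono : forall i j (h : le i j) a b, spec_le a b -> spec_le (p i j h a) (p i j h b).
  by move=> i j h a b; apply: cont_spec; exact: pcont.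
have hx : forall i, exists xi : X i, limits (q i @ U) = spec_down xi.
  move=> i.
  have hc : (exists c : X i, q i @ U --> c) \/ Q.
    case: hconv => [[y0 hy0]|hq]; last by right.
    by left; exists (q i y0); apply: cvg_cont => //; exact: lim_cont.
  have [xi [hxi _]] := hX i (q i @ U) (ultra_fmap (q i) UU) hc.
  by exists xi.
pose x := fun i => proj1_sig (cid (hx i)).
have hxE : forall i, limits (q i @ U) = spec_down (x i).
  by move=> i; rewrite /x; case: (cid (hx i)).
have hAE : forall y, limits U y <-> forall i, spec_le (q i y) (x i).
  move=> y; split.
    move=> hy i; have : limits (q i @ U) (q i y).
      by apply: cvg_cont => //; exact: lim_cont.
    by rewrite hxE.
  move=> hy; apply: lim_cvg => i.
  have : spec_down (x i) (q i y) by exact: hy.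
  by rewrite -hxE.
have xup : forall i j (h : le i j), spec_le (p i j h (x j)) (x i).
  move=> i j h.
  have hj : limits (q j @ U) (x j) by rewrite hxE; exact: spec_refl.
  have : limits (q i @ U) (p i j h (x j)).
    move=> A hA; have := cvg_cont (pcont i j h) hj hA.
    apply: (@filterS _ U) => w /=; by rewrite lim_cone.
  by rewrite hxE.
have inf_pt : forall i (K : Type) (z : K -> X i), inhabited K ->
   (forall k1 k2, exists k3, spec_le (z k3) (z k1) /\ spec_le (z k3) (z k2)) ->
   (forall y, limits U y -> forall k, spec_le (q i y) (z k)) ->
   exists m, forall w, spec_le w m <-> forall k, spec_le w (z k).
  move=> i K z hK hf hlow.
  have [W [WU eW]] := filtered_inf hK hf.
  have hc : (exists c : X i, W --> c) \/ Q.
    case: hconv => [[y0 hy0]|hq]; last by right.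
    left; exists (q i y0).
    have : limits W (q i y0) by rewrite eW => k; exact: hlow.
    by [].
  have [m [em _]] := hX i W WU hc.
  exists m => w.
  have e := congr1 (fun S => S w) (etrans (esym em) eW).
  rewrite /spec_down /= in e.
  by rewrite e.
pose P := fun m : (forall i, X i) =>
  (forall i j (h : le i j), spec_le (p i j h (m j)) (m i)) /\
  (forall i, spec_le (m i) (x i)) /\
  (forall y, limits U y -> forall i, spec_le (q i y) (m i)).
have Px : P x.
  split => //; split.
    by move=> i; exact: spec_refl.
  by move=> y /hAE.
pose T := {m : forall i, X i | P m}.
pose R := fun a b : T => `[< forall i, spec_le (proj1_sig b i) (proj1_sig a i) >].
have [m0 hm0] : exists t : T, premaximal R t.
  apply: (ZL_preorder (exist _ x Px)).
  - by move=> t; apply/asboolP => i; exact: spec_refl.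
  - move=> r s t /asboolP h1 /asboolP h2; apply/asboolP => i.
    exact: spec_trans (h2 i) (h1 i).
  - move=> A Atot.
    case: (pselect (A !=set0)) => [[s0 As0]|A0]; last first.
      by exists (exist _ x Px) => s As; exfalso; apply: A0; exists s.
    pose K := {s : T | A s}.
    have hm : forall i, exists mi : X i, forall w, spec_le w mi <->
        forall k : K, spec_le w (proj1_sig (proj1_sig k) i).
      move=> i; apply: inf_pt.
      - exact: (inhabits (exist _ s0 As0)).
      - move=> [s1 As1] [s2 As2]; case: (Atot s1 s2 As1 As2) => /asboolP h.
          by exists (exist _ s2 As2); split => /=; [exact: h | exact: spec_refl].
        by exists (exist _ s1 As1); split => /=; [exact: spec_refl | exact: h].
      - move=> y hy [s As]; have [_ [_ h3]] := proj2_sig s; exact: h3.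
    pose ms := fun i => proj1_sig (cid (hm i)).
    have hms : forall i w, spec_le w (ms i) <->
        forall k : K, spec_le w (proj1_sig (proj1_sig k) i).
      by move=> i; rewrite /ms; case: (cid (hm i)).
    have Pms : P ms.
      split; [|split].
      - move=> i j h; apply/hms => -[s As] /=; have [h1 _] := proj2_sig s.
        apply: spec_trans (h1 i j h); apply: pmono.
        by have /hms := @spec_refl _ (ms j); move=> /(_ (exist _ s As)).
      - move=> i; have /hms := @spec_refl _ (ms i); move=> /(_ (exist _ s0 As0)) /= h.
        have [_ [h2 _]] := proj2_sig s0; exact: spec_trans h (h2 i).
      - move=> y hy i; apply/hms => -[s As] /=; have [_ [_ h3]] := proj2_sig s.
        exact: h3.
    exists (exist _ ms Pms) => s As; apply/asboolP => i /=.
    by have /hms := @spec_refl _ (ms i); move=> /(_ (exist _ s As)).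
pose m := proj1_sig m0.
have [mup [mx mA]] : P m := proj2_sig m0.
have hpsi : forall i, exists mi : X i, forall w, spec_le w mi <->
    forall k : {j : I | le i j}, spec_le w (p i (proj1_sig k) (proj2_sig k) (m (proj1_sig k))).
  move=> i; apply: inf_pt.
  - exact: (inhabits (exist _ i (hrefl i))).
  - move=> [j1 h1] [j2 h2]; have [j3 [h13 h23]] := hdir j1 j2.
    exists (exist _ j3 (htrans _ _ _ h1 h13)); split => /=.
      rewrite -(pcomp i j1 j3 h1 h13 (htrans _ _ _ h1 h13)).
      by apply: pmono; exact: mup.
    rewrite -(pcomp i j2 j3 h2 h23 (htrans _ _ _ h1 h13)).
    by apply: pmono; exact: mup.
  - by move=> y hy [j h] /=; rewrite -(lim_cone i j h y); apply: pmono; exact: mA.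
pose m' := fun i => proj1_sig (cid (hpsi i)).
have hm' : forall i w, spec_le w (m' i) <->
    forall k : {j : I | le i j}, spec_le w (p i (proj1_sig k) (proj2_sig k) (m (proj1_sig k))).
  by move=> i; rewrite /m'; case: (cid (hpsi i)).
have Pm' : P m'.
  split; [|split].
  - move=> i k hik; apply/hm' => -[j hij] /=.
    have [l [hjl hkl]] := hdir j k.
    have h1 : spec_le (m' k) (p k l hkl (m l)).
      by have /hm' := @spec_refl _ (m' k); move=> /(_ (exist _ l hkl)).
    have h2 := pmono i k hik _ _ h1.
    rewrite (pcomp i k l hik hkl (htrans _ _ _ hij hjl)) in h2.
    rewrite -(pcomp i j l hij hjl (htrans _ _ _ hij hjl)) in h2.
    by apply: spec_trans h2 _; apply: pmono; exact: mup.
  - move=> i; have /hm' := @spec_refl _ (m' i); move=> /(_ (exist _ i (hrefl i))) /=.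
    by rewrite pid => h; exact: spec_trans h (mx i).
  - by move=> y hy i; apply/hm' => -[j h] /=; rewrite -(lim_cone i j h y); apply: pmono; exact: mA.
have Rm : R m0 (exist _ m' Pm').
  apply/asboolP => i /=; have /hm' := @spec_refl _ (m' i).
  by move=> /(_ (exist _ i (hrefl i))) /=; rewrite pid.
have /asboolP Rm' := hm0 _ Rm.
have thr : forall i j h, p i j h (m j) = m i.
  move=> i j h; apply: (goodX_T0 (hX i)); first exact: mup.
  apply: spec_trans (Rm' i) _.
  by have /hm' := @spec_refl _ (m' i); move=> /(_ (exist _ j h)).
have [y0 _] : exists y : Y, setT y by apply: (filter_ex (F := U)); exact: filterT.
have [ys hys] := thread_pt y0 m thr.
exists ys; split.
  rewrite predeqE => y; split.
    by move=> hy; apply: lim_spec => i; rewrite hys; exact: mA y hy i.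
  move=> hy; apply/hAE => i; apply: spec_trans (mx i); rewrite -hys.
  exact: (cont_spec (lim_cont i)).
move=> y' e'.
have hy' : limits U y' by rewrite e'; exact: spec_refl.
have hys' : limits U ys by apply/hAE => i; rewrite hys; exact: mx.
apply: pts_eq => i; apply: (goodX_T0 (hX i)).
  apply: (cont_spec (lim_cont i)).
  by move: hys'; rewrite e'.
by rewrite hys; exact: mA.
Qed.

End Limit.

Theorem theorem5p1 :
  forall (I : Type) (le : I -> I -> Prop) (X : I -> topologicalType)
    (p : forall i j, le i j -> X j -> X i),
  projective_system p ->
  (forall (Y : topologicalType) (q : forall i, Y -> X i),
      is_projective_limit p q ->
      (forall i, locally_strongly_sober (X i)) -> locally_strongly_sober Y) /\
  (forall (Y : topologicalType) (q : forall i, Y -> X i),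
      is_projective_limit p q ->
      (forall i, strongly_sober (X i)) -> strongly_sober Y).
Proof.
move=> I le X p hsys; split.
  move=> Y q hlim hL U UU [y0 hy0].
  apply: (main_lemma _ _ _ _ hsys _ _ hlim False _ U UU (or_introl (ex_intro _ y0 hy0))).
  by move=> i W WU [hc|[]]; exact: hL i W WU hc.
move=> Y q hlim hS U UU.
apply: (main_lemma _ _ _ _ hsys _ _ hlim True _ U UU (or_intror Logic.I)).
by move=> i W WU _; exact: hS i W WU.
Qed.
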